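(* The mapping $\Delta$ is a bijection between covered maps and left-connected oriented maps.
   Context: Permutations are composed right to left. A (rooted) map is a triple $M=(H,\sigma,\alpha)$ with $H$ a finite set of half-edges, $\alpha$ a fixed-point-free involution, $\sigma$ a permutation, $\langle\sigma,\alpha\rangle$ transitive on $H$, and a root $r\in H$; maps are considered up to root-preserving relabelling. Cycles of $\sigma$, $\alpha$, $\phi=\sigma\alpha$ are vertices, edges, faces. For $S\subseteq H$ and a permutation $\pi$, $\pi_{|S}$ is the permutation of $S$ obtained by erasing elements not in $S$ from the cycles of $\pi$. A spanned map $(M,S)$ has $S\subseteq H$ stable by $\alpha$; it is a covered map if $(S,\sigma_{|S},\alpha_{|S})$ is a connecting unicellular map ($\sigma_{|S},\alpha_{|S}$ transitive on $S$, $S$ meets every cycle of $\sigma$ — except $S=\emptyset$ is allowed if $M$ has one vertex — and $\sigma_{|S}\alpha_{|S}$ is cyclic). Its motion function $\theta(h)=\sigma\alpha(h)$ for $h\in S$, $\theta(h)=\sigma(h)$ otherwise, is cyclic for covered maps, and the appearance order is $r\prec_S\theta(r)\prec_S\cdots\prec_S\theta^{|H|-1}(r)$. An oriented map is $(M,(I,O))$ with $H=I\uplus O$ and $\alpha(I)=O$. $\Delta(M,S)=(M,(I,O))$ with $I=\{h\in S:\alpha(h)\prec_S h\}\cup\{h\notin S:h\prec_S\alpha(h)\}$, $O=H\setminus I$. Let $h_0=r$ be the root. A left-path is a sequence $h_1,\dots,h_k$ of half-edges of $I$ such that for each $j=1,\dots,k$ there is an integer $q_j>0$ with $h_{j-1}=\sigma^{q_j}(\alpha(h_j))$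 and $\sigma^p(\alpha(h_j))\in O$ for all $p=0,\dots,q_j-1$. The oriented map is left-connected if every $h\in I$ is the last element $h_k$ of some left-path. *)

(* Defs.v *)
From mathcomp Require Import all_boot all_fingroup.
Set Implicit Arguments. Unset Strict Implicit. Unset Printing Implicit Defensive.

Section Maps.
Variable H : finType.

(* Transitivity of the group generated by two functions f, g on a set S:
   any two elements of S are linked by a chain of applications of f and g
   (for permutations of a finite set this is transitivity of <f,g>). *)
Definition transitive_on2 (f g : H -> H) (S : {set H}) : Prop :=
  forall x y, x \in S -> y \in S ->
    connect [rel a b | (b == f a) || (b == g a)] x y.

Definition cyclic_on (f : H -> H) (S : {set H}) : Prop :=
  forall x y, x \in S -> y \in S -> fconnect f x y.

Definition is_map (sigma alpha : {perm H}) : Prop :=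
  (forall h, alpha h != h) /\ (forall h, alpha (alpha h) = h) /\
  transitive_on2 sigma alpha [set: H].

(* pi_|S : erase elements not in S from the cycles of pi
   (for h in S, the first iterate pi^k h, k >= 1, lying in S; identity outside S) *)
Definition restr (pi : {perm H}) (S : {set H}) (h : H) : H :=
  if h \in S then
    iter (find (fun k => iter k.+1 pi h \in S) (iota 0 #|H|)).+1 pi h
  else h.

Variables (sigma alpha : {perm H}) (r : H).

Definition spanned (S : {set H}) : Prop := forall h, h \in S -> alpha h \in S.

Definition one_vertex : Prop := forall x y, fconnect sigma x y.

Definition meets_every_vertex (S : {set H}) : Prop :=
  forall h, exists2 h', h' \in S & fconnect sigma h h'.

(* (M,S) is a covered map: (S, sigma_|S, alpha_|S) is a connecting unicellular map *)
Definition covered (S : {set H}) : Prop :=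
  [/\ spanned S,
      transitive_on2 (restr sigma S) (restr alpha S) S,
      (meets_every_vertex S \/ (S = set0 /\ one_vertex)) &
      cyclic_on (fun h => restr sigma S (restr alpha S h)) S].

Definition motion (S : {set H}) (h : H) : H :=
  if h \in S then sigma (alpha h) else sigma h.

Definition prec (S : {set H}) (h h' : H) : bool :=
  findex (motion S) r h < findex (motion S) r h'.

Definition Delta (S : {set H}) : {set H} * {set H} :=
  let I := [set h | if h \in S then prec S (alpha h) h else prec S h (alpha h)] in
  (I, ~: I).

Definition oriented (IO : {set H} * {set H}) : Prop :=
  IO.2 = ~: IO.1 /\ [set alpha x | x in IO.1] = IO.2.

(* s = [:: h_1; ...; h_k] is a left-path (with h_0 = r) *)
Definition left_path (IO : {set H} * {set H}) (s : seq H) : Prop :=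
  (forall h, h \in s -> h \in IO.1) /\
  forall j, j < size s ->
    exists q, 0 < q /\
      iter q sigma (alpha (nth r s j)) = nth r (r :: s) j /\
      forall p, p < q -> iter p sigma (alpha (nth r s j)) \in IO.2.

Definition left_connected (IO : {set H} * {set H}) : Prop :=
  forall h, h \in IO.1 ->
    exists s, [/\ s <> [::], left_path IO s & last r s = h].

End Maps.

(* Main.v *)
Require Import Defs.
From mathcomp Require Import all_boot all_fingroup.
Set Implicit Arguments. Unset Strict Implicit. Unset Printing Implicit Defensive.

Section Proof.
Variable H : finType.
Variables (sigma alpha : {perm H}) (r : H).
Hypothesis alphaK : forall h, alpha (alpha h) = h.
Hypothesis alpha_fp : forall h, alpha h != h.

Lemma restr_spec (pi : {perm H}) (S : {set H}) h : h \in S ->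
  exists k, [/\ 0 < k, iter k pi h \in S,
     (forall j, 0 < j < k -> iter j pi h \notin S) & restr pi S h = iter k pi h].
Proof.
move=> hS; rewrite /restr hS.
set P := (fun k => iter k.+1 pi h \in S).
have ord_le : fingraph.order pi h <= #|H| by apply: max_card.
have hasP : has P (iota 0 #|H|).
  apply/hasP; exists (fingraph.order pi h).-1.
    rewrite mem_iota /= add0n; apply: leq_trans ord_le.
    by rewrite orderSpred.
  by rewrite /P orderSpred (iter_order (@perm_inj _ pi)).
have ilt : find P (iota 0 #|H|) < #|H|.
  by rewrite -[X in _ < X](size_iota 0 #|H|) -has_find.
exists (find P (iota 0 #|H|)).+1; split => //.
- by have := nth_find 0 hasP; rewrite nth_iota // add0n.
- case=> // j /andP[_ ji].
  have := before_find 0 ji; rewrite nth_iota ?add0n //.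
    by rewrite /P => /negbT.
  by apply: ltn_trans ilt.
Qed.

Local Notation th S := (motion sigma alpha S).

Lemma alpha_inS (S : {set H}) : spanned alpha S -> forall x, (alpha x \in S) = (x \in S).
Proof. by move=> hS x; apply/idP/idP => [/hS|/hS //]; rewrite alphaK. Qed.

Lemma motion_inj (S : {set H}) : spanned alpha S -> injective (th S).
Proof.
move=> hS x y; rewrite /motion.
have aS := alpha_inS hS.
case: ifP => xS; case: ifP => yS.
- by move/perm_inj/perm_inj.
- move/perm_inj => E; by move: yS; rewrite -E aS xS.
- move/perm_inj => E; by move: xS; rewrite E aS yS.
- by move/perm_inj.
Qed.

Lemma th_notin (S : {set H}) x : x \notin S -> th S x = sigma x.
Proof. by rewrite /motion => /negbTE ->. Qed.
Lemma th_in (S : {set H}) x : x \in S -> th S x = sigma (alpha x).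
Proof. by rewrite /motion => ->. Qed.

Lemma frtheta (S : {set H}) h : spanned alpha S -> h \in S ->
  exists k, [/\ 0 < k, iter k (th S) h \in S,
     (forall j, 0 < j < k -> iter j (th S) h \notin S) &
     restr sigma S (restr alpha S h) = iter k (th S) h].
Proof.
move=> hS hin.
have ahS : alpha h \in S by apply: hS.
have -> : restr alpha S h = alpha h.
  have [k [k0 kS kb ->]] := restr_spec alpha hin.
  case: k k0 kS kb => // [[|k]] // _ _ kb.
  by have := kb 1 isT; rewrite /= ahS.
have [k [k0 kS kb ->]] := restr_spec sigma ahS.
have E : forall j, 0 < j <= k -> iter j (th S) h = iter j sigma (alpha h).
  elim=> // [[|j]] IH /andP[_ jk].
    by rewrite /= th_in.
  rewrite iterS IH ?(ltnW jk) //= th_notin //.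
  by have := kb j.+1 jk.
exists k; split => //.
- by rewrite E // k0 leqnn.
- move=> j /andP[j0 jk]; rewrite E; first by apply: kb; rewrite j0. by rewrite j0 ltnW.
- by rewrite E // k0 leqnn.
Qed.

Definition fret (S : {set H}) h := restr sigma S (restr alpha S h).

Lemma strong_ind (P : nat -> Prop) :
  (forall m, (forall k, k < m -> P k) -> P m) -> forall m, P m.
Proof.
move=> IH m; elim: m {-2}m (leqnn m) => [|m IHm] k km; apply: IH => j jk.
  by have := leq_trans jk km.
by apply: IHm; rewrite -ltnS (leq_trans jk km).
Qed.

Lemma cyc_fret (S : {set H}) : spanned alpha S ->
  forall m x, x \in S -> iter m (th S) x \in S -> fconnect (fret S) x (iter m (th S) x).
Proof.
move=> hS; elim/strong_ind=> m IH x xS mS.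
case: m IH mS => [|m] IH mS; first by rewrite connect0.
have [k [k0 kS kb E]] := frtheta hS xS.
have km : k <= m.+1.
  rewrite leqNgt; apply/negP => mk.
  by have := kb m.+1 mk; rewrite mS.
have -> : iter m.+1 (th S) x = iter (m.+1 - k) (th S) (iter k (th S) x).
  by rewrite -iterD subnK.
rewrite -E; apply: connect_trans (fconnect1 _ _) _.
apply: IH; first by rewrite ltn_subrL k0.
- by rewrite /fret E.
- by rewrite /fret E -iterD subnK.
Qed.

Lemma fret_in (S : {set H}) h : spanned alpha S -> h \in S ->
  fret S h \in S /\ fconnect (th S) h (fret S h).
Proof.
move=> hS hin; have [k [k0 kS kb E]] := frtheta hS hin.
by rewrite /fret E; split => //; apply: fconnect_iter.
Qed.

Definition cyc (S : {set H}) := forall x, fconnect (th S) r x.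

Lemma cyc_all (S : {set H}) : spanned alpha S -> cyc S -> forall x y, fconnect (th S) x y.
Proof.
move=> hS c x y; apply: connect_trans (c y).
by rewrite (fconnect_sym (motion_inj hS)).
Qed.

Lemma first_hit (S : {set H}) : forall i a, iter i (th S) a \in S ->
  exists j, iter j (th S) a \in S /\ iter j (th S) a = iter j sigma a.
Proof.
elim=> [|i IH] a; first by exists 0.
case aS : (a \in S); first by move=> _; exists 0.
have ta : th S a = sigma a by rewrite th_notin ?aS.
rewrite iterSr ta => /IH [j [jS E]]; exists j.+1.
by rewrite !iterSr ta.
Qed.

Lemma covered_of_cyc (S : {set H}) : spanned alpha S -> cyc S -> covered sigma alpha S.
Proof.
move=> hS c; have call := cyc_all hS c.
have cf : cyclic_on (fret S) S.
  move=> x y xS yS; have := call x y => /iter_findex E.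
  by have := @cyc_fret S hS (findex (th S) x y) x xS; rewrite E => /(_ yS).
split => //.
- move=> x y xS yS; have := cf x y xS yS => /iter_findex <-.
  elim: (findex _ x y) => [|i IH]; first by rewrite connect0.
  rewrite iterS; apply: connect_trans IH _.
  apply: connect_trans (_ : connect _ _ (restr alpha S (iter i (fret S) x))) _;
    apply: connect1; by rewrite /= eqxx ?orbT.
- have [S0|[s sS]] := set_0Vmem S.
    right; split => // x y.
    have E : th S =1 sigma by move=> z; rewrite th_notin ?S0 ?in_set0.
    by rewrite -(eq_fconnect E); apply: call.
  left => h; have := call h s => /iter_findex E.
  have hs : iter (findex (th S) h s) (th S) h \in S by rewrite E.
  have [j [jS Ej]] := first_hit hs.
  by exists (iter j (th S) h) => //; rewrite Ej fconnect_iter.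
Qed.

Lemma first_hit_sig (S : {set H}) : forall i a, iter i sigma a \in S ->
  exists j, iter j sigma a \in S /\ iter j (th S) a = iter j sigma a.
Proof.
elim=> [|i IH] a; first by exists 0.
case aS : (a \in S); first by move=> _; exists 0.
have ta : th S a = sigma a by rewrite th_notin ?aS.
rewrite iterSr => /IH [j [jS E]]; exists j.+1.
by rewrite !iterSr ta.
Qed.

Lemma cyc_of_covered (S : {set H}) : covered sigma alpha S -> cyc S.
Proof.
case=> hS _ mev cf.
case: mev => [mev|[S0 onev]]; last first.
  have E : th S =1 sigma by move=> z; rewrite th_notin ?S0 ?in_set0.
  by move=> x; rewrite (eq_fconnect E).
have [s0 s0S rs0] := mev r.
have := iter_findex rs0 => E0.
have hs : iter (findex sigma r s0) sigma r \in S by rewrite E0.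
have [j [s1S Ej]] := first_hit_sig hs.
have rs1 : fconnect (th S) r (iter j sigma r) by rewrite -Ej fconnect_iter.
set s1 := iter j sigma r in s1S rs1.
have reachS : forall s, s \in S -> fconnect (th S) r s.
  move=> s sS; have := cf s1 s s1S sS => /iter_findex <-.
  elim: (findex _ s1 s) => [|i IH] //.
  have : iter i (fret S) s1 \in S /\ fconnect (th S) r (iter i (fret S) s1).
    elim: i {IH} => [|i [iS ir]] //; rewrite iterS.
    have [fS fc] := fret_in hS iS; split => //; exact: connect_trans fc.
  case=> iS ir; rewrite iterS; have [_ fc] := fret_in hS iS.
  exact: connect_trans fc.
move=> x; have [s sS xs] := mev x.
rewrite (fconnect_sym (@perm_inj _ sigma)) in xs.
rewrite -(iter_findex xs); elim: (findex _ s x) => [|i IH]; first exact: reachS.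
rewrite iterS; case yS : (iter i sigma s \in S).
  have ayS : alpha (iter i sigma s) \in S by apply: hS.
  have := th_in ayS; rewrite alphaK => <-.
  exact: connect_trans (reachS _ ayS) (fconnect1 _ _).
have := th_notin (negbT yS) => <-.
exact: connect_trans IH (fconnect1 _ _).
Qed.

Section Walk.
Variable I : {set H}.
Hypothesis orient : forall x, (alpha x \in I) = (x \notin I).

Definition wstep (st : H * {set H}) : H * {set H} :=
  (if (alpha st.1 \in st.2) == (st.1 \in I) then sigma (alpha st.1) else sigma st.1,
   st.1 |: st.2).
Definition wst k := iter k wstep (r, set0).
Definition wx k := (wst k).1.
Definition wV k := (wst k).2.
Definition wd k := (alpha (wx k) \in wV k) == (wx k \in I).

Lemma wx0 : wx 0 = r. Proof. by []. Qed.
Lemma wV0 : wV 0 = set0. Proof. by []. Qed.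
Lemma wxS k : wx k.+1 = if wd k then sigma (alpha (wx k)) else sigma (wx k).
Proof. by []. Qed.
Lemma wVS k : wV k.+1 = wx k |: wV k.
Proof. by []. Qed.

Lemma wV_mem k y : (y \in wV k) = has (fun j => wx j == y) (iota 0 k).
Proof.
elim: k => [|k IH]; first by rewrite wV0 in_set0.
rewrite wVS in_setU1 IH -addn1 iotaD has_cat /= orbF add0n orbC.
by rewrite eq_sym.
Qed.

Lemma wV_memP k y : reflect (exists2 j, j < k & wx j = y) (y \in wV k).
Proof.
rewrite wV_mem; apply: (iffP hasP) => [[j]|[j jk <-]].
  by rewrite mem_iota add0n => /andP[_ jk] /eqP; exists j.
by exists j; rewrite ?mem_iota ?add0n ?jk.
Qed.

Lemma wV_sub i k y : i <= k -> y \in wV i -> y \in wV k.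
Proof.
move=> ik /wV_memP [j ji <-]; apply/wV_memP; exists j => //.
exact: leq_trans ji ik.
Qed.

Lemma wx_in i k : i < k -> wx i \in wV k.
Proof. by move=> ik; apply/wV_memP; exists i. Qed.

Lemma card_wV N : (forall j, j <= N -> wx j \notin wV j) -> #|wV N.+1| = N.+1.
Proof.
elim: N => [|N IH] h.
  by rewrite wVS wV0 setU0 cards1.
by rewrite wVS cardsU1 h // IH // => j jN; apply: h; rewrite ltnW.
Qed.

Lemma ex_rep : exists k, (0 < k) && (wx k \in wV k).
Proof.
case: (boolP [exists j : 'I_(#|H|).+1, wx j \in wV j]) => [/existsP [j jV]|/existsPn nV].
  exists j; rewrite jV andbT lt0n; apply/eqP => j0.
  by move: jV; rewrite j0 wV0 in_set0.
have := @card_wV #|H| => /(_ _).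
have cl : #|wV (#|H|).+1| <= #|H| by apply: max_card.
case/(_ _)/Wrap => [j jN|E]; last by move: cl; rewrite E ltnn.
by have := nV (Ordinal (jN : j < #|H|.+1)).
Qed.


Variable m : nat.
Hypothesis m0 : 0 < m.
Hypothesis mV : wx m \in wV m.
Hypothesis mmin : forall k, 0 < k -> wx k \in wV k -> m <= k.

Lemma notV k : k < m -> wx k \notin wV k.
Proof.
case: k => [|k] km; first by rewrite wV0 in_set0.
by apply/negP => kV; have := mmin (ltn0Sn k) kV; rewrite leqNgt km.
Qed.

Lemma wdist i j : i < j -> j < m -> wx i != wx j.
Proof.
move=> ij jm; apply/negP => /eqP E; have := notV jm.
by rewrite -E wx_in.
Qed.

Lemma wdist_eq i j : i < m -> j < m -> wx i = wx j -> i = j.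
Proof.
move=> im jm E; case: (ltngtP i j) => // [ij|ji].
  by have := wdist ij jm; rewrite E eqxx.
by have := wdist ji im; rewrite E eqxx.
Qed.

Lemma xm_r : wx m = r.
Proof.
case/wV_memP: mV => j jm E.
case: j jm E => [|j] jm E; first by rewrite -E.
have Em : m.-1.+1 = m by rewrite prednK.
set m' := m.-1 in Em.
have m'm : m' < m by rewrite -Em.
have jm' : j < m' by rewrite -ltnS Em.
rewrite -Em in E.
have nm' := notV m'm.
have nj := notV (ltn_trans jm' m'm).
move: E; rewrite !wxS.
have Vsub : wV j \subset wV m' by apply/subsetP => y; apply: wV_sub; exact: ltnW.
have xjV : wx j \in wV m' by apply: wx_in.
have dne : wx j != wx m' by apply: wdist.
have nmj : wx m' \notin wV j by apply: contra nm'; apply: (subsetP Vsub).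
case dj: (wd j); case dm: (wd m'); move=> /perm_inj E.
- by move: dne; rewrite -(alphaK (wx j)) E alphaK eqxx.
- have amV : alpha (wx m') \in wV m' by rewrite -E alphaK.
  have xj : wx j = alpha (wx m') by rewrite -E alphaK.
  move: dm dj; rewrite /wd amV E (negbTE nmj) /=.
  case xmI : (wx m' \in I) => //= _; by rewrite xj orient xmI.
- have amV : alpha (wx m') \in wV m' by rewrite -E.
  have ajx : alpha (wx j) = wx m' by rewrite E alphaK.
  move: dm dj; rewrite /wd amV ajx (negbTE nmj) /=.
  case xmI : (wx m' \in I) => //= _; by rewrite E orient xmI.
- by move: dne; rewrite E eqxx.
Qed.


Definition wS := [set y | has (fun j => (wx j == y) && wd j) (iota 0 m)].

Lemma wS_mem k : k < m -> (wx k \in wS) = wd k.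
Proof.
move=> km; rewrite inE; apply/hasP/idP => [[j]|dk].
  rewrite mem_iota add0n => /andP[_ jm] /andP[/eqP E dj].
  by rewrite -(wdist_eq jm km E).
by exists k; rewrite ?mem_iota ?add0n ?km ?eqxx.
Qed.

Lemma th_wx k : k < m -> th wS (wx k) = wx k.+1.
Proof. by move=> km; rewrite wxS /motion wS_mem. Qed.

Lemma iter_wx k : k <= m -> iter k (th wS) r = wx k.
Proof.
elim: k => [|k IH] km //.
by rewrite iterS IH ?th_wx // ltnW.
Qed.

Lemma wB y : sigma y \in wV m -> y \notin I -> (y \in wV m) && (alpha y \in wV m).
Proof.
case/wV_memP => k km E yI.
have [i [im Ei]] : exists i, i < m /\ wx i.+1 = sigma y.
  case: k km E => [|k] km E.
    exists m.-1; rewrite prednK // ?ltn_predL //; split => //.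
    by rewrite xm_r -E.
  by exists k; split => //; apply: ltnW.
move: Ei; rewrite wxS; case di: (wd i) => /perm_inj E'.
- have ay : alpha y = wx i by rewrite -E' alphaK.
  rewrite ay wx_in // andbT.
  move: di; rewrite /wd E' -ay orient yI /= => /eqP Vi.
  by apply: (wV_sub (ltnW im)); rewrite Vi.
- rewrite -E' wx_in //=.
  move: di; rewrite /wd E' (negbTE yI).
  by case: (alpha y \in wV i) (@wV_sub i m (alpha y) (ltnW im)) => // ->.
Qed.


Lemma wpath s : left_path sigma alpha r (I, ~: I) s ->
  forall j, j <= size s -> nth r (r :: s) j \in wV m.
Proof.
case=> _ st; elim=> [|j IH] js; first by rewrite /= -wx0 wx_in.
have [q [q0 [Eq Oq]]] := st j js.
have aV := IH (ltnW js); rewrite -Eq in aV.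
set b := nth r s j in Eq Oq aV *.
have down : forall i, i <= q -> iter (q - i) sigma (alpha b) \in wV m.
  elim=> [|i IHi] iq; first by rewrite subn0.
  have y_notI : iter (q - i.+1) sigma (alpha b) \notin I.
    by have := Oq (q - i.+1); rewrite inE; apply; rewrite ltn_subrL q0.
  have := IHi (ltnW iq); rewrite -(subnSK iq) iterS => /wB /(_ y_notI).
  by case/andP.
have := down q.-1 (leq_pred q); rewrite -subn1 subKn //=.
have ab : alpha b \notin I by have := Oq 0 q0; rewrite inE.
by move/wB => /(_ ab) /andP[_]; rewrite alphaK.
Qed.

Lemma nth_last_cons s : nth r (r :: s) (size s) = last r s.
Proof. by have := nth_last r (r :: s). Qed.

Lemma escape (V : {set H}) : forall q y, y \notin V -> iter q sigma y \in V ->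
  exists z, z \notin V /\ sigma z \in V.
Proof.
elim=> [|q IH] y yV; first by rewrite /= (negbTE yV).
rewrite iterSr; case sV : (sigma y \in V); first by exists y.
by move=> /(IH _ (negbT sV)).
Qed.

Lemma wfull : left_connected sigma alpha r (I, ~: I) -> forall y, y \in wV m.
Proof.
move=> lc.
have IV : forall h, h \in I -> h \in wV m.
  move=> h /lc [s [sn lp ls]].
  by have := wpath lp (leqnn (size s)); rewrite nth_last_cons ls.
move=> y; apply/negPn/negP => yV.
have yI : y \notin I by apply: contra yV; apply: IV.
have := lc (alpha y); rewrite orient => /(_ yI) [s [sn lp ls]].
have lp' := lp; case: lp' => _ /(_ (size s).-1).
have js : (size s).-1 < size s by rewrite prednK ?lt0n ?size_eq0 //; apply/eqP.
case/(_ js) => q [_ [Eq _]].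
move: Eq; rewrite nth_last ls alphaK => Eq.
have := wpath lp (ltnW js); rewrite -Eq => qV.
have [z [zV szV]] := escape yV qV.
have zI : z \notin I by apply: contra zV; apply: IV.
by have := wB szV zI; rewrite (negbTE zV).
Qed.

Lemma wxV_iff j k : j < m -> k < m -> (wx j \in wV k) = (j < k).
Proof.
move=> jm km; apply/wV_memP/idP => [[i ik E]|jk]; last by exists j.
by rewrite -(wdist_eq (ltn_trans ik km) jm E).
Qed.

End Walk.

Lemma mem_alpha_img (A : {set H}) x : (x \in [set alpha y | y in A]) = (alpha x \in A).
Proof.
apply/imsetP/idP => [[y yA ->]|xA]; first by rewrite alphaK.
by exists (alpha x); rewrite ?alphaK.
Qed.

Section Pos.
Variable S : {set H}.
Hypothesis hS : spanned alpha S.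
Hypothesis c : cyc S.

Definition pos x := findex (th S) r x.

Lemma order_cyc : fingraph.order (th S) r = #|H|.
Proof.
apply/eqP; rewrite eqn_leq max_card /=.
by apply: subset_leq_card; apply/subsetP => x _; exact: c x.
Qed.

Lemma pos_lt x : pos x < #|H|.
Proof. by rewrite -order_cyc; apply: findex_max. Qed.

Lemma pos_iter x : iter (pos x) (th S) r = x.
Proof. exact: iter_findex. Qed.

Lemma iter_pos k : k < #|H| -> pos (iter k (th S) r) = k.
Proof. by rewrite -order_cyc; apply: findex_iter. Qed.

Lemma pos_inj : injective pos.
Proof. by move=> x y E; rewrite -(pos_iter x) E pos_iter. Qed.

Lemma pos_th y : th S y != r -> pos (th S y) = (pos y).+1.
Proof.
move=> ne; have E : th S y = iter (pos y).+1 (th S) r by rewrite iterS pos_iter.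
case: (ltnP (pos y).+1 #|H|) => [lt|ge]; first by rewrite E iter_pos.
have eq : (pos y).+1 = #|H| by apply/eqP; rewrite eqn_leq ge pos_lt.
move: ne; rewrite E eq -order_cyc (iter_order (motion_inj hS)).
by rewrite eqxx.
Qed.

Lemma pos_neq x : pos x != pos (alpha x).
Proof. by apply/eqP => /pos_inj E; move: (alpha_fp x); rewrite -E eqxx. Qed.

Lemma memI x : (x \in (Delta sigma alpha r S).1) = ((x \in S) == (pos (alpha x) < pos x)).
Proof.
rewrite /Delta /= inE /prec -/(pos _) -/(pos _).
have := pos_neq x; case: (x \in S) => //=.
by case: ltngtP.
Qed.

Lemma orientedD : oriented alpha (Delta sigma alpha r S).
Proof.
split => //; apply/setP => x.
change ((x \in [set alpha y | y in (Delta sigma alpha r S).1]) = (x \in ~: (Delta sigma alpha r S).1)).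
rewrite mem_alpha_img in_setC !memI alphaK (alpha_inS hS).
have := pos_neq x; case: (x \in S); case: ltngtP => //.
Qed.


Local Notation Ip := (Delta sigma alpha r S).1.

Lemma alphaI x : (alpha x \in Ip) = (x \notin Ip).
Proof.
rewrite !memI alphaK (alpha_inS hS).
by have := pos_neq x; case: (x \in S); case: ltngtP.
Qed.

Definition tau x := maxn (pos x) (pos (alpha x)).

Lemma keyK w : w \notin Ip -> sigma w != r -> pos (sigma w) = (tau w).+1.
Proof.
rewrite memI /tau; case wS: (w \in S) => /= nI ne.
- have awS : alpha w \in S by apply: hS.
  have E : sigma w = th S (alpha w) by rewrite th_in // alphaK.
  rewrite E pos_th -?E //; congr _.+1; apply/esym/maxn_idPr.
  by rewrite leqNgt.
- have E : sigma w = th S w by rewrite th_notin ?wS.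
  rewrite E pos_th -?E //; congr _.+1; apply/esym/maxn_idPl.
  by apply: ltnW; rewrite negbK in nI.
Qed.

Lemma chain h : h \in Ip -> forall i,
  (forall j, j < i -> iter j sigma (alpha h) \notin Ip) ->
  (forall j, 0 < j <= i -> iter j sigma (alpha h) != r) ->
  tau h + i <= tau (iter i sigma (alpha h)).
Proof.
move=> hI; elim=> [|i IH] nI nr.
  by rewrite addn0 /= /tau alphaK maxnC.
have nr' : forall j, 0 < j <= i -> iter j sigma (alpha h) != r.
  by move=> j /andP[j0 ji]; apply: nr; rewrite j0 ltnW.
have := IH (fun j ji => nI j (ltnW ji)) nr'.
have := keyK (nI i (ltnSn i)) (nr i.+1 (leqnn _)).
rewrite iterS addnS => E le; rewrite -ltnS in le.
apply: leq_trans le _; rewrite -E; exact: leq_maxl.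
Qed.


Lemma tau_lt x : tau x < #|H|.
Proof. by rewrite /tau gtn_max !pos_lt. Qed.

Lemma parent h : h \in Ip -> exists q, [/\ 0 < q,
   (iter q sigma (alpha h) \in Ip) || (iter q sigma (alpha h) == r) &
   forall p, 0 < p < q -> (iter p sigma (alpha h) \notin Ip) && (iter p sigma (alpha h) != r)].
Proof.
move=> hI.
set P := fun q => (0 < q) && ((iter q sigma (alpha h) \in Ip) || (iter q sigma (alpha h) == r)).
have exP : exists q, P q.
  case: (boolP [exists j : 'I_(#|H|).+1, P j]) => [/existsP [j Pj]|/existsPn nP].
    by exists j.
  have nP' : forall j, 0 < j <= #|H| -> (iter j sigma (alpha h) \notin Ip) && (iter j sigma (alpha h) != r).
    move=> j /andP[j0 jH]; have := nP (Ordinal (jH : j < #|H|.+1)).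
    by rewrite /P /= j0 /= negb_or.
  have nI0 : forall j, j < #|H| -> iter j sigma (alpha h) \notin Ip.
    case=> [|j] jH; first by rewrite /= alphaI hI.
    by case/andP: (nP' j.+1 (ltnW jH)).
  have nr0 : forall j, 0 < j <= #|H| -> iter j sigma (alpha h) != r.
    by move=> j jH; case/andP: (nP' j jH).
  have := chain hI nI0 nr0.
  by move=> le; have := leq_ltn_trans le (tau_lt _); rewrite ltnNge leq_addl.
case: (ex_minnP exP) => q /andP[q0 Pq] qmin.
exists q; split => // p /andP[p0 pq].
apply/negP => /negP; rewrite negb_and !negbK => Pp.
by have := qmin p; rewrite /P p0 Pp leqNgt pq => /(_ isT).
Qed.


Lemma lp_rcons (IO : {set H} * {set H}) s b :
  left_path sigma alpha r IO s -> b \in IO.1 ->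
  (exists q, 0 < q /\ iter q sigma (alpha b) = last r s /\
     forall p, p < q -> iter p sigma (alpha b) \in IO.2) ->
  left_path sigma alpha r IO (rcons s b).
Proof.
case=> mem st bI stb; split.
  by move=> x; rewrite mem_rcons in_cons => /orP[/eqP->|/mem].
move=> j; rewrite size_rcons ltnS leq_eqVlt => /orP[/eqP->|js].
  by rewrite nth_rcons ltnn eqxx -rcons_cons nth_rcons /= ltnSn nth_last_cons.
rewrite nth_rcons js -rcons_cons nth_rcons /= ltnS (ltnW js).
exact: st.
Qed.

Lemma lc_Delta : left_connected sigma alpha r (Delta sigma alpha r S).
Proof.
have main : forall k h, #|H| - tau h = k -> h \in Ip ->
    exists s, [/\ s <> [::], left_path sigma alpha r (Delta sigma alpha r S) s & last r s = h].
  elim/strong_ind=> k IH h hk hI.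
  have [q [q0 Pq qmin]] := parent hI.
  set cc := iter q sigma (alpha h) in Pq.
  have stepq : forall p, p < q -> iter p sigma (alpha h) \in (Delta sigma alpha r S).2.
    move=> p pq; rewrite /= in_setC.
    case: p pq => [|p] pq; first by rewrite /= alphaI hI.
    by case/andP: (qmin p.+1 pq).
  case ccr : (cc == r).
    exists [:: h]; split => //; split.
      by move=> x; rewrite inE => /eqP->.
    case=> // _; exists q; split => //; split => //.
    by apply/eqP.
  rewrite ccr orbF in Pq.
  have le : tau h + q <= tau cc.
    apply: chain => // j.
      case: j => [|j] jq; first by rewrite /= alphaI hI.
      by case/andP: (qmin j.+1 jq).
    case/andP=> j0; rewrite leq_eqVlt => /orP[/eqP->|jq]; first by rewrite ccr.
    by have := qmin j; rewrite j0 jq => /(_ isT) /andP[].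
  have ltk : #|H| - tau cc < k.
    rewrite -hk; apply: ltn_sub2l; first exact: tau_lt.
    by apply: leq_trans le; rewrite -addn1 leq_add2l.
  have [s [sn lp ls]] := IH (#|H| - tau cc) ltk cc erefl Pq.
  exists (rcons s h); split.
  - by case: s {sn lp ls}.
  - apply: lp_rcons => //; exists q; split => //; split => //; by rewrite ls.
  - by rewrite last_rcons.
by move=> h; apply: main erefl.
Qed.

End Pos.

Lemma pos_transfer (S1 S2 : {set H}) : spanned alpha S1 -> spanned alpha S2 ->
  cyc S1 -> cyc S2 -> forall k x, k < #|H| ->
  (forall j, j <= k -> iter j (th S1) r = iter j (th S2) r) ->
  pos S1 x < k -> pos S2 x = pos S1 x.
Proof.
move=> h1 h2 c1 c2 k x kH E lt.
have Ex : iter (pos S1 x) (th S2) r = x by rewrite -E ?(ltnW lt) // pos_iter.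
rewrite -{1}Ex iter_pos //; exact: ltn_trans lt kH.
Qed.

Lemma inj_Delta (S1 S2 : {set H}) : covered sigma alpha S1 -> covered sigma alpha S2 ->
  Delta sigma alpha r S1 = Delta sigma alpha r S2 -> S1 = S2.
Proof.
move=> cv1 cv2 ED.
have c1 := cyc_of_covered cv1; have c2 := cyc_of_covered cv2.
case: cv1 => h1 _ _ _; case: cv2 => h2 _ _ _.
have memeq : forall k, k < #|H| ->
    (forall j, j <= k -> iter j (th S1) r = iter j (th S2) r) ->
    (iter k (th S1) r \in S1) = (iter k (th S1) r \in S2).
  move=> k kH E; set y := iter k (th S1) r.
  have E' : forall j, j <= k -> iter j (th S2) r = iter j (th S1) r by move=> j /E ->.
  have p1 : pos S1 y = k by rewrite iter_pos.
  have p2 : pos S2 y = k by rewrite /y E // iter_pos.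
  have lteq : (pos S1 (alpha y) < k) = (pos S2 (alpha y) < k).
    apply/idP/idP => lt.
      by rewrite (pos_transfer h1 h2 c1 c2 kH E lt).
    by rewrite (pos_transfer h2 h1 c2 c1 kH E' lt).
  have := congr1 (fun D : {set H} * {set H} => y \in D.1) ED; rewrite /= !memI // p1 p2 lteq.
  by case: (y \in S1); case: (y \in S2); case: (_ < k).
have all : forall k, k < #|H| -> forall j, j <= k -> iter j (th S1) r = iter j (th S2) r.
  elim=> [|k IH] kH j; first by rewrite leqn0 => /eqP->.
  rewrite leq_eqVlt => /orP[/eqP->|jk]; last by apply: IH => //; apply: ltnW.
  have IH' := IH (ltnW kH).
  rewrite !iterS -IH' // /motion -memeq //; exact: ltnW.
apply/setP => x.
have := memeq (pos S1 x) (pos_lt c1 x) (all _ (pos_lt c1 x)).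
by rewrite pos_iter.
Qed.


Lemma surj (IO : {set H} * {set H}) : oriented alpha IO -> left_connected sigma alpha r IO ->
  exists2 S, covered sigma alpha S & Delta sigma alpha r S = IO.
Proof.
case: IO => I O [/= EO img]; subst O.
have orient : forall x, (alpha x \in I) = (x \notin I).
  by move=> x; rewrite -mem_alpha_img img in_setC.
move=> lc.
case: (ex_minnP (ex_rep I)) => m /andP[m0 mV] mmin.
have mmin' : forall k, 0 < k -> wx I k \in wV I k -> m <= k.
  by move=> k k0 kV; apply: mmin; rewrite k0.
have full := @wfull I orient m m0 mV mmin' lc.
have cardm : m = #|H|.
  have Em : m.-1.+1 = m by rewrite prednK.
  have nV : forall j, j <= m.-1 -> wx I j \notin wV I j.
    by move=> j jm; apply: (@notV I m mmin'); rewrite -Em ltnS.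
  have := card_wV nV; rewrite Em => Ecard.
  have VT : wV I m = setT by apply/setP => y; rewrite full inE.
  by rewrite -{1}Ecard VT cardsT.
have xall : forall y, exists2 k, k < m & wx I k = y by move=> y; apply/wV_memP/full.
set S := wS I m.
have hS : spanned alpha S.
  move=> y; case: (xall y) => k km <- yS.
  case: (xall (alpha (wx I k))) => j jm Ej.
  rewrite -Ej (@wS_mem I m mmin' j jm).
  rewrite (@wS_mem I m mmin' k km) /wd -Ej (@wxV_iff I m mmin' j k jm km) in yS.
  rewrite /wd Ej alphaK (@wxV_iff I m mmin' k j km jm) orient.
  have jk : j != k.
    by apply/eqP => jk; move: (alpha_fp (wx I k)); rewrite -Ej jk eqxx.
  by move: yS jk; case: ltngtP => //; case: (wx I k \in I).
have cS : cyc S.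
  move=> y; case: (xall y) => k km <-.
  by rewrite -(@iter_wx I m mmin' k (ltnW km)) fconnect_iter.
exists S; first exact: covered_of_cyc.
have D1 : (Delta sigma alpha r S).1 = I.
  apply/setP => y; case: (xall y) => k km <-.
  case: (xall (alpha (wx I k))) => j jm Ej.
  have pk : forall i, i < m -> pos S (wx I i) = i.
    move=> i im; rewrite -(@iter_wx I m mmin' i (ltnW im)) iter_pos //.
    by rewrite -cardm.
  rewrite memI // -Ej !pk // (@wS_mem I m mmin' k km) /wd -Ej.
  rewrite (@wxV_iff I m mmin' j k jm km).
  by case: (j < k); case: (wx I k \in I).
rewrite [Delta _ _ _ S]surjective_pairing D1.
congr (_, _); change (~: (Delta sigma alpha r S).1 = ~: I); by rewrite D1.
Qed.
End Proof.

Theorem mainTheorem2 (H : finType) (sigma alpha : {perm H}) (r : H) :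
  is_map sigma alpha ->
  [/\ (forall S : {set H}, covered sigma alpha S ->
         oriented alpha (Delta sigma alpha r S) /\
         left_connected sigma alpha r (Delta sigma alpha r S)),
      (forall S1 S2 : {set H}, covered sigma alpha S1 -> covered sigma alpha S2 ->
         Delta sigma alpha r S1 = Delta sigma alpha r S2 -> S1 = S2) &
      (forall IO : {set H} * {set H}, oriented alpha IO ->
         left_connected sigma alpha r IO ->
         exists2 S, covered sigma alpha S & Delta sigma alpha r S = IO)].
Proof.
case=> fp [inv _]; split.
- move=> S cv; have c := @cyc_of_covered H sigma alpha r inv S cv.
  have hS : spanned alpha S by case: cv.
  split; first exact: (orientedD inv fp hS c).
  move=> h hI; exact: (lc_Delta inv fp hS c hI).
- by move=> S1 S2; apply: inj_Delta.
- by move=> IO; apply: surj.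
Qed.
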